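(* Let $n\ge2$ be an integer, $\sigma\ge0$, $R'>0$, and define $a_1=\frac{n}{2R'}$, $a_2=\frac{a_1}{n-1}$, $a_k=\min\big\{(1+\frac1{n-1})a_{k-1},\frac{\sqrt{n(n+\sigma A_{k-1})}}{2R'}\big\}$ for $k\ge3$, where $A_k=\sum_{i=1}^ka_i$. Let $K_0=\big\lceil\frac{\log n}{\log n-\log(n-1)}\big\rceil$. Then for all $k\ge K_0$, $A_k\ge\frac{n(k-K_0+n-1)}{2R'}$. *)

(* Defs.v *)
From HB Require Import structures.
From mathcomp Require Import all_boot all_order all_algebra.
From mathcomp Require Import all_classical all_reals all_analysis.
Set Implicit Arguments. Unset Strict Implicit. Unset Printing Implicit Defensive.
Import Order.TTheory GRing.Theory Num.Theory.
Local Open Scope ring_scope.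

Fixpoint aA {R : realType} (n : nat) (sigma Rp : R) (k : nat) : R * R :=
  match k with
  | 0 => (0, 0)
  | 1 => let a := n%:R / (2 * Rp) in (a, a)
  | 2 => let a1 := n%:R / (2 * Rp) in
         let a := a1 / (n%:R - 1) in (a, a1 + a)
  | k'.+1 => let p := aA n sigma Rp k' in
             let a := Num.min ((1 + 1 / (n%:R - 1)) * p.1)
                              (Num.sqrt (n%:R * (n%:R + sigma * p.2)) / (2 * Rp)) in
             (a, p.2 + a)
  end.

Definition seq_a {R : realType} (n : nat) (sigma Rp : R) (k : nat) : R := (aA n sigma Rp k).1.
Definition seq_A {R : realType} (n : nat) (sigma Rp : R) (k : nat) : R := (aA n sigma Rp k).2.

Definition K0 {R : realType} (n : nat) : int :=
  Num.ceil (ln (n%:R : R) / (ln (n%:R : R) - ln (n%:R - 1 : R))).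

(* Main.v *)
Require Import Defs.
Set Warnings "-all".
From HB Require Import structures.
From mathcomp Require Import all_boot all_order all_algebra.
From mathcomp Require Import all_classical all_reals all_analysis.
From mathcomp Require Import ring lra.
Import Order.TTheory GRing.Theory Num.Theory.
Local Open Scope ring_scope.

Section P4.
Variables (R : realType) (n : nat) (sigma Rp : R).
Hypotheses (hn : (2 <= n)%N) (hsigma : 0 <= sigma) (hRp : 0 < Rp).

Let N : R := n%:R.
Let c : R := N / (2 * Rp).
Let q : R := 1 + 1 / (N - 1).
Let a k := seq_a n sigma Rp k.
Let A k := seq_A n sigma Rp k.

Lemma N1 : 1 < N.
Proof. rewrite /N (_ : 1 = 1%:R) // ltr_nat. by []. Qed.

Lemma cpos : 0 < c.
Proof. have := N1 => h; rewrite /c divr_gt0 //; [exact: lt_trans h | exact: mulr_gt0]. Qed.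

Lemma Astep m : A m.+2 = A m.+1 + a m.+2.
Proof. by case: m. Qed.

Lemma arec m : a m.+3 = Num.min (q * a m.+2)
   (Num.sqrt (N * (N + sigma * A m.+2)) / (2 * Rp)).
Proof. by []. Qed.

Lemma inv m : [/\ 0 <= A m.+1, 0 <= a m.+2 & Num.min (A m.+1 / (N - 1)) c <= a m.+2].
Proof.
have hN := N1.
have hd : 0 < N - 1 by lra.
have hc := cpos.
elim: m => [|m [h1 h2 h3]].
  have e1 : A 1 = c by [].
  have e2 : a 2 = c / (N - 1) by [].
  rewrite e1 e2; split; [lra| exact: divr_ge0 (ltW hc) (ltW hd)|].
  by rewrite ge_min lexx.
have hA : 0 <= A m.+2 by rewrite Astep; lra.
have hS : c <= Num.sqrt (N * (N + sigma * A m.+2)) / (2 * Rp).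
  rewrite /c ler_pM2r ?invr_gt0; last exact: mulr_gt0.
  have h0 : 0 <= sigma * A m.+2 by apply: mulr_ge0.
  have : Num.sqrt (N ^+ 2) <= Num.sqrt (N * (N + sigma * A m.+2)).
    rewrite ler_sqrt; last by apply: mulr_ge0; lra.
    rewrite expr2 ler_pM2l; lra.
  rewrite sqrtr_sqr ger0_norm //; lra.
have hq : q * a m.+2 = a m.+2 + a m.+2 / (N - 1).
  by rewrite /q mulrDl mul1r mul1r mulrC.
split => //.
  rewrite arec le_min; apply/andP; split.
    rewrite hq; apply: addr_ge0 => //; exact: divr_ge0 h2 (ltW hd).
  by apply: le_trans hS; lra.
rewrite arec le_min; apply/andP; split; last first.
  by apply: le_trans hS; rewrite ge_min lexx orbT.
rewrite ge_min; apply/orP.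
move: h3; rewrite ge_min => /orP [h3|h3].
  left; rewrite Astep mulrDl hq; apply: lerD => //; lra.
right; rewrite hq; have := divr_ge0 h2 (ltW hd); lra.
Qed.

Lemma U m : c * Num.min (q ^+ m) (N - 1) <= A m.+1.
Proof.
have hN := N1.
have hd : 0 < N - 1 by lra.
have hc := cpos.
elim: m => [|m IH].
  rewrite expr0 (_ : A 1 = c) //.
  rewrite ger_pMr // ge_min lexx //.
have [h1 h2 h3] := inv m.
set x := A m.+1 in IH h1 h3 *.
rewrite Astep -/x.
set t := q ^+ m in IH *.
have ht : 0 <= t by rewrite /t exprn_ge0 // /q; have := divr_ge0 ler01 (ltW hd); lra.
have eq : q ^+ m.+1 = t + t / (N - 1) by rewrite exprS /t /q mulrDl mul1r mul1r mulrC.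
rewrite eq.
case: (leP t (N - 1)) => htN.
  move: IH; rewrite (_ : Num.min t (N - 1) = t); last by apply/min_idPl.
  move=> IH.
  move: h3; rewrite ge_min => /orP [h3|h3].
    have : c * t / (N - 1) <= x / (N - 1) by rewrite ler_pM2r // invr_gt0.
    have : c * Num.min (t + t / (N - 1)) (N - 1) <= c * (t + t / (N - 1)).
      by rewrite ler_pM2l // ge_min lexx.
    rewrite mulrDr mulrA; lra.
  have : t / (N - 1) <= 1 by rewrite ler_pdivrMr // mul1r.
  have : c * Num.min (t + t / (N - 1)) (N - 1) <= c * (t + t / (N - 1)).
    by rewrite ler_pM2l // ge_min lexx.
  move=> hh h4.
  have : c * (t / (N - 1)) <= c * 1 by rewrite ler_pM2l.
  rewrite mulrDr in hh; lra.
move: IH; rewrite (_ : Num.min t (N - 1) = N - 1); last by apply/min_idPr; exact: ltW.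
move=> IH.
have : c * Num.min (t + t / (N - 1)) (N - 1) <= c * (N - 1).
  by rewrite ler_pM2l // ge_min lexx orbT.
lra.
Qed.

Lemma tailA K (hK : N <= q ^+ K.+1) j : c * (j%:R + N - 1) <= A (K.+1 + j).
Proof.
have hN := N1.
have hd : 0 < N - 1 by lra.
have hc := cpos.
have hqe : q = N / (N - 1).
  rewrite /q; field; apply/eqP; lra.
elim: j => [|j IH].
  rewrite addn0 add0r.
  apply: le_trans (U K).
  rewrite ler_pM2l // le_min lexx andbT.
  move: hK; rewrite exprSr hqe mulrA ler_pdivlMr // => hK.
  have : N * (N - 1) <= N * (N / (N - 1)) ^+ K by rewrite [X in _ <= X]mulrC.
  rewrite ler_pM2l; last lra.
  by [].
rewrite addnS -addSn.
have [h1 h2 h3] := inv (K + j).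
rewrite Astep; rewrite -addSn in h1 h3 *.
have hx : c <= A (K.+1 + j) / (N - 1).
  rewrite ler_pdivlMr //; apply: le_trans IH.
  rewrite ler_pM2l //; have : (0 : R) <= j%:R by []. lra.
have : c <= a (K + j).+2.
  by apply: le_trans h3; rewrite le_min hx lexx.
rewrite -addSn; move: IH; rewrite -natr1; lra.
Qed.

End P4.

Theorem proposition4 (R : realType) (n : nat) (sigma Rp : R)
  (hn : (2 <= n)%N) (hsigma : 0 <= sigma) (hRp : 0 < Rp) (k : nat) :
  (K0 (R := R) n <= k%:Z) ->
  n%:R * ((k%:R - (K0 (R := R) n)%:~R + n%:R - 1) : R) / (2 * Rp) <= seq_A n sigma Rp k.
Proof.
have hN : (1 : R) < n%:R by rewrite (_ : 1 = 1%:R) // ltr_nat.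
have hd : (0 : R) < n%:R - 1 by lra.
have hL : 0 < ln (n%:R : R) - ln (n%:R - 1 : R).
  rewrite subr_gt0 ltr_ln ?posrE; lra.
have hlnN : 0 < ln (n%:R : R) by apply: ln_gt0.
have hx : 0 < ln (n%:R : R) / (ln (n%:R : R) - ln (n%:R - 1 : R)) by apply: divr_gt0.
have hge := ceil_ge (ln (n%:R : R) / (ln (n%:R : R) - ln (n%:R - 1 : R))).
rewrite /K0.
move: hge.
case E: (Num.ceil _) => [[|K]|K] hge.
- have : (0 : R) < 0 by apply: lt_le_trans hge.
  by rewrite ltxx.
- rewrite lez_nat => hk.
  have hq : 0 < 1 + 1 / (n%:R - 1) :> R by have := divr_gt0 ltr01 hd; lra.
  have hqe : 1 + 1 / (n%:R - 1) = n%:R / (n%:R - 1) :> R.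
    field; apply/eqP; lra.
  have hlq : ln (1 + 1 / (n%:R - 1) : R) = ln (n%:R : R) - ln (n%:R - 1 : R).
    rewrite hqe lnM ?posrE ?invr_gt0; [|lra|lra].
    by rewrite lnV ?posrE.
  have hKq : n%:R <= (1 + 1 / (n%:R - 1)) ^+ K.+1 :> R.
    rewrite -ler_ln ?posrE; [|lra|exact: exprn_gt0].
    rewrite lnXn // hlq -[X in _ <= X]mulr_natr mulrC.
    by move: hge; rewrite ler_pdivrMr.
  have := @tailA R n sigma Rp hn hsigma hRp K hKq (k - K.+1).
  rewrite subnKC // natrB // => h.
  apply: le_trans h; rewrite mulrAC; exact: lexx.
- have : (0 : R) < (Negz K)%:~R by apply: lt_le_trans hge.
  rewrite NegzE mulrNz oppr_gt0 => h.
  have : (0:R) <= (K.+1%:Z)%:~R by rewrite ler0z.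
  lra.
Qed.
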